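(* Let $N \in \mathbb{R}^{n \times r}$, $V \in \mathbb{R}^{r \times n}$, and for $\kappa\in\mathbb{R}^r_+$ let $f_\kappa(x) = N_\kappa x^V$ on $\mathbb{R}^n_+$; let $S = \mathrm{im}(N)$. Let $M \in \mathbb{R}^{d' \times n}$ and $\gamma\colon \mathbb{R}^r_+\to\mathbb{R}_+^{d'}$, and set $Y_\kappa = \{x \in \mathbb{R}^n_+ \mid x^M = \gamma(\kappa)\}$. Assume $Y_\kappa\subseteq\{x\in\mathbb{R}^n_+\mid f_\kappa(x)=0\}$ for all $\kappa\in\mathbb{R}^r_+$. Assume moreover: (i) $\sigma(\ker(M)) \cap \sigma(S) \neq \{0\}$; (ii) for every $x \in \mathbb{R}^n_+$ there exists $\kappa \in \mathbb{R}^r_+$ with $x \in Y_\kappa$. Then there exist $\kappa^* \in \mathbb{R}^r_+$ and distinct $x^*,y^* \in \mathbb{R}^n_+$ such that $x^*, y^* \in Y_{\kappa^*}$ and $x^* - y^* \in S$.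
   Context: $\mathbb{R}_+$ denotes the strictly positive reals. $(x^V)_j=\prod_i x_i^{v_{ji}}$ and $(x^M)_k=\prod_i x_i^{m_{ki}}$ (real exponents), $N_\kappa=N\,\mathrm{diag}(\kappa)$. $\sigma$ is the componentwise sign vector, $\sigma(T)=\{\sigma(x)\mid x\in T\}$, and $0$ denotes the zero sign vector. *)

(* Defs.v *)
From Stdlib Require Import Reals.
Open Scope R_scope.

(* Vectors in R^n are functions nat -> R, only indices < n matter.
   Matrices in R^{a x b} are functions nat -> nat -> R (row, column). *)

Fixpoint sumR (n : nat) (f : nat -> R) : R :=
  match n with O => 0 | S m => sumR m f + f m end.

Fixpoint prodR (n : nat) (f : nat -> R) : R :=
  match n with O => 1 | S m => prodR m f * f m end.

Definition posvec (n : nat) (x : nat -> R) : Prop := forall i, (i < n)%nat -> 0 < x i.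

Definition monom (n : nat) (A : nat -> nat -> R) (x : nat -> R) (k : nat) : R :=
  prodR n (fun i => Rpower (x i) (A k i)).

(* f_kappa(x) = N diag(kappa) x^V,  N : n x r, V : r x n *)
Definition fk (n r : nat) (N V : nat -> nat -> R) (kappa x : nat -> R) (i : nat) : R :=
  sumR r (fun j => N i j * kappa j * monom n V x j).

Definition Yk (n d' : nat) (M : nat -> nat -> R) (gamma : (nat -> R) -> (nat -> R))
  (kappa x : nat -> R) : Prop :=
  posvec n x /\ forall k, (k < d')%nat -> monom n M x k = gamma kappa k.

Definition in_image (n r : nat) (N : nat -> nat -> R) (v : nat -> R) : Prop :=
  exists z : nat -> R, forall i, (i < n)%nat -> v i = sumR r (fun j => N i j * z j).

Definition in_kernel (n d' : nat) (M : nat -> nat -> R) (v : nat -> R) : Prop :=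
  forall k, (k < d')%nat -> sumR n (fun i => M k i * v i) = 0.

Definition sgn (a : R) : R :=
  match Rlt_le_dec 0 a with
  | left _ => 1
  | right _ => match Rlt_le_dec a 0 with left _ => -1 | right _ => 0 end
  end.

(* sigma(ker M) ∩ sigma(S) <> {0}: some nonzero sign vector lies in both *)
Definition sign_cond (n r d' : nat) (N M : nat -> nat -> R) : Prop :=
  exists u v : nat -> R,
    in_kernel n d' M u /\ in_image n r N v /\
    (forall i, (i < n)%nat -> sgn (u i) = sgn (v i)) /\
    (exists i, (i < n)%nat /\ sgn (u i) <> 0).

(* Main.v *)
Require Import Defs.
From Stdlib Require Import Reals Lra Lia.
Open Scope R_scope.

Lemma sumR_ext n f g : (forall i, (i < n)%nat -> f i = g i) -> sumR n f = sumR n g.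
Proof. induction n; simpl; intros H; auto. rewrite IHn by (intros; apply H; lia). rewrite H by lia. auto. Qed.

Lemma sumR_plus n f g : sumR n (fun i => f i + g i) = sumR n f + sumR n g.
Proof. induction n; simpl; [lra|]. rewrite IHn; lra. Qed.

Lemma prodR_exp n g : prodR n (fun i => exp (g i)) = exp (sumR n g).
Proof. induction n; simpl. rewrite exp_0; auto. rewrite IHn, exp_plus; auto. Qed.

Lemma monom_exp n A x k : monom n A x k = exp (sumR n (fun i => A k i * ln (x i))).
Proof. unfold monom, Rpower. apply prodR_exp. Qed.

Lemma sgn_pos a : 0 < a -> sgn a = 1.
Proof. unfold sgn; destruct (Rlt_le_dec 0 a); [auto|lra]. Qed.
Lemma sgn_neg a : a < 0 -> sgn a = -1.
Proof. unfold sgn; destruct (Rlt_le_dec 0 a); [lra|]. destruct (Rlt_le_dec a 0); [auto|lra]. Qed.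
Lemma sgn_zero a : a = 0 -> sgn a = 0.
Proof. unfold sgn; destruct (Rlt_le_dec 0 a); [lra|]. destruct (Rlt_le_dec a 0); [lra|auto]. Qed.
Lemma sgn_inv a : (sgn a = 1 -> 0 < a) /\ (sgn a = -1 -> a < 0) /\ (sgn a = 0 -> a = 0).
Proof. unfold sgn; destruct (Rlt_le_dec 0 a); [|destruct (Rlt_le_dec a 0)]; repeat split; intros; lra. Qed.

Lemma sign_same a b : sgn a = sgn b -> (0 < a /\ 0 < b) \/ (a < 0 /\ b < 0) \/ (a = 0 /\ b = 0).
Proof.
  intros H. destruct (Rtotal_order a 0) as [h|[h|h]].
  - rewrite (sgn_neg _ h) in H. pose proof (sgn_inv b); intuition.
  - rewrite (sgn_zero _ h) in H. pose proof (sgn_inv b); intuition.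
  - rewrite (sgn_pos _ h) in H. pose proof (sgn_inv b); intuition.
Qed.

Theorem mainTheorem18 (n r d' : nat) (N V M : nat -> nat -> R)
  (gamma : (nat -> R) -> (nat -> R))
  (* gamma : R^r_+ -> R^{d'}_+ : depends only on the first r coordinates *)
  (Hgamma_ext : forall kappa kappa', (forall j, (j < r)%nat -> kappa j = kappa' j) ->
       forall k, (k < d')%nat -> gamma kappa k = gamma kappa' k)
  (Hgamma_pos : forall kappa, posvec r kappa -> posvec d' (gamma kappa))
  (HY : forall kappa, posvec r kappa -> forall x, Yk n d' M gamma kappa x ->
          forall i, (i < n)%nat -> fk n r N V kappa x i = 0)
  (Hsign : sign_cond n r d' N M)
  (Hcover : forall x, posvec n x -> exists kappa, posvec r kappa /\ Yk n d' M gamma kappa x) :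
  exists kappa xs ys : nat -> R,
    posvec r kappa /\
    (exists i, (i < n)%nat /\ xs i <> ys i) /\
    Yk n d' M gamma kappa xs /\ Yk n d' M gamma kappa ys /\
    in_image n r N (fun i => xs i - ys i).
Proof.
  destruct Hsign as [u [v [Hu [Hv [Hs [i0 [Hi0 Hnz]]]]]]].
  set (ys := fun i => if Req_EM_T (u i) 0 then 1 else v i / (exp (u i) - 1)).
  set (xs := fun i => ys i * exp (u i)).
  assert (Hy : forall i, (i < n)%nat -> 0 < ys i /\ xs i - ys i = v i).
  { intros i Hi. unfold xs, ys. destruct (Req_EM_T (u i) 0) as [e|e].
    - pose proof (sign_same _ _ (Hs i Hi)). rewrite e, exp_0. split; [lra|]. lra.
    - destruct (sign_same _ _ (Hs i Hi)) as [[h1 h2]|[[h1 h2]|[h1 h2]]]; [| |lra].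
      + assert (1 < exp (u i)) by (rewrite <- exp_0; apply exp_increasing; lra).
        split. apply Rdiv_lt_0_compat; lra. field; lra.
      + assert (exp (u i) < 1) by (rewrite <- exp_0; apply exp_increasing; lra).
        split. apply Rdiv_pos_pos_rev || idtac.
        replace (v i / (exp (u i) - 1)) with ((- v i) / (1 - exp (u i))) by (field; lra).
        apply Rdiv_lt_0_compat; lra. field; lra. }
  assert (Hxp : posvec n xs).
  { intros i Hi. unfold xs. apply Rmult_lt_0_compat. apply (Hy i Hi). apply exp_pos. }
  assert (Hyp : posvec n ys) by (intros i Hi; apply (Hy i Hi)).
  assert (Hm : forall k, (k < d')%nat -> monom n M xs k = monom n M ys k).
  { intros k Hk. rewrite !monom_exp. f_equal.
    rewrite (sumR_ext n _ (fun i => M k i * ln (ys i) + M k i * u i)).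
    rewrite sumR_plus, (Hu k Hk). lra.
    intros i Hi. unfold xs. rewrite ln_mult, ln_exp. ring. apply Hyp; auto. apply exp_pos. }
  destruct (Hcover xs Hxp) as [kappa [Hk [_ HY2]]].
  exists kappa, xs, ys. split; [auto|]. split.
  - exists i0. split; auto. intros E. unfold xs in E.
    assert (exp (u i0) = 1).
    { apply (Rmult_eq_reg_l (ys i0)). lra. pose proof (Hyp i0 Hi0); lra. }
    apply Hnz. apply sgn_zero. rewrite <- (ln_exp (u i0)), H, ln_1. auto.
  - split. split; auto. split. split; auto. intros k Hk'. rewrite <- Hm; auto.
    destruct Hv as [z Hz]. exists z. intros i Hi.
    rewrite <- Hz by auto. apply Hy; auto.
Qed.
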